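(* Let $a<b$ with $[a,b]\subset[0,\infty)$, let $f,g:[a,b]\to\mathbb{R}$ be integrable with $0\le g(t)\le1$ for all $t\in[a,b]$ and such that $\int_a^b g(t)f'(t)\,dt$ exists. Suppose $f$ is absolutely continuous on $[a,b]$ and $|f'|$ is $s$-convex on $[a,b]$ for some fixed $s\in(0,1]$. Let $\lambda:=\int_a^b g(t)\,dt$. Then $$\left|\int_a^{a+\lambda} f(t)\,dt-\int_a^b f(t)g(t)\,dt\right|\le\frac{1}{(s+1)(s+2)}\left[\lambda^2|f'(a)|+(b-a-\lambda)^2|f'(b)|\right]+\frac{1}{s+2}\left[\lambda^2+(b-a-\lambda)^2\right]|f'(a+\lambda)|,$$ and $$\left|\int_a^b f(t)g(t)\,dt-\int_{b-\lambda}^b f(t)\,dt\right|\le\frac{1}{(s+1)(s+2)}\left[\lambda^2|f'(b)|+(b-a-\lambda)^2|f'(a)|\right]+\frac{1}{s+2}\left[\lambda^2+(b-a-\lambda)^2\right]|f'(b-\lambda)|.$$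
   Context: For fixed $s\in(0,1]$, a function $h:I\to\mathbb{R}$ on an interval $I\subset[0,\infty)$ is $s$-convex (in the second sense) if $h(\alpha x+\beta y)\le\alpha^s h(x)+\beta^s h(y)$ for all $x,y\in I$ and all $\alpha,\beta\ge0$ with $\alpha+\beta=1$. *)

(* Defs.v *)
From HB Require Import structures.
From mathcomp Require Import all_boot all_order all_algebra.
From mathcomp Require Import all_classical all_reals all_analysis.
Set Implicit Arguments. Unset Strict Implicit. Unset Printing Implicit Defensive.
Import Order.TTheory GRing.Theory Num.Theory numFieldNormedType.Exports.
Local Open Scope classical_set_scope.
Local Open Scope ring_scope.

Definition s_convex_on (R : realType) (s : R) (I : set R) (h : R -> R) : Prop :=
  forall x y (al be : R), I x -> I y -> 0 <= al -> 0 <= be -> al + be = 1 ->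
    h (al * x + be * y) <= powR al s * h x + powR be s * h y.

Definition abs_continuous_on (R : realType) (a b : R) (f : R -> R) : Prop :=
  forall e : R, 0 < e -> exists2 d : R, 0 < d &
    forall (n : nat) (x y : 'I_n -> R),
      (forall i, a <= x i /\ x i <= y i /\ y i <= b) ->
      (forall i j, i != j -> y i <= x j \/ y j <= x i) ->
      \sum_(i < n) (y i - x i) < d ->
      \sum_(i < n) `|f (y i) - f (x i)| < e.

(* Main.v *)
Require Import Defs.
From HB Require Import structures.
From mathcomp Require Import all_boot all_order all_algebra.
From mathcomp Require Import all_classical all_reals all_analysis.
From mathcomp Require Import ring lra.
Import Order.TTheory GRing.Theory Num.Theory numFieldNormedType.Exports.
Local Open Scope classical_set_scope.
Local Open Scope ring_scope.
Lemma deriv_pt (R : realType) (F : R -> R) (t dF : R) : is_derive t 1 F dF ->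
  forall e, 0 < e -> exists2 d, 0 < d & forall w, `|w - t| < d ->
   `|F w - F t - dF * (w - t)| <= e * `|w - t|.
Proof.
move=> [Hd Hv] e e0.
have H : (fun h => h^-1 *: ((F \o shift t) (h *: 1) - F t)) @ 0^' --> dF.
  by rewrite -Hv; exact: Hd.
move/cvgr_dist_le : H => /(_ e e0).
rewrite near_withinE => /nbhs_ballP[d /= d0 Hb].
exists d => // w wt.
have [->|wne] := eqVneq w t; first by rewrite !subrr mulr0 normr0 subr0 mulr0 normr0.
have wt0 : w - t != 0 by rewrite subr_eq0.
have := Hb (w - t); rewrite /ball /= sub0r normrN => /(_ wt wt0).
rewrite -[(w - t)%:A]/((w - t) * 1) mulr1 subrK /GRing.scale /=.
have -> : F w - F t - dF * (w - t) = - ((w - t) * (dF - (w - t)^-1 * (F w - F t))).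
  by field.
rewrite normrN normrM mulrC => H.
by rewrite [X in _ <= X]mulrC ler_wpM2l.
Qed.

Lemma straddle (R : realType) (F : R -> R) (t dF : R) : is_derive t 1 F dF ->
  forall e, 0 < e -> exists2 d, 0 < d & forall u v, u <= t -> t <= v -> v - u < d ->
   `|F v - F u - dF * (v - u)| <= e * (v - u).
Proof.
move=> HF e e0; have [d d0 Hd] := @deriv_pt R F t dF HF e e0.
exists d => // u v ut tv vu.
have h1 : `|F v - F t - dF * (v - t)| <= e * (v - t).
  have := Hd v; rewrite ger0_norm ?subr_ge0 //; apply; lra.
have h2 : `|F u - F t - dF * (u - t)| <= e * (t - u).
  have := Hd u; rewrite ler0_norm ?subr_le0 // opprB; apply; lra.
have -> : F v - F u - dF * (v - u) = (F v - F t - dF * (v - t)) - (F u - F t - dF * (u - t)) by ring.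
apply: (le_trans (ler_normB _ _)).
have -> : e * (v - u) = e * (v - t) + e * (t - u) by ring.
exact: lerD.
Qed.
Definition nov (R : realType) (p q : R * R) := (p.2 <= q.1) || (q.2 <= p.1).

Lemma mem_bigU (R : realType) (s : seq (R*R)) (x : R) :
  (\big[setU/set0]_(p <- s) [set` `]p.1, p.2]]) x -> exists2 p, p \in s & [set` `]p.1, p.2]] x.
Proof.
elim: s => [|q s IH]; first by rewrite big_nil.
rewrite big_cons => -[Hq|/IH [p ps Hp]]; first by exists q => //; rewrite mem_head.
by exists p => //; rewrite in_cons ps orbT.
Qed.

Lemma meas_bigU (R : realType) (s : seq (R*R)) :
  (forall p, p \in s -> p.1 <= p.2) -> pairwise (@nov R) s ->
  (@lebesgue_measure R) (\big[setU/set0]_(p <- s) [set` `]p.1, p.2]]) = (\sum_(p <- s) (p.2 - p.1))%:E.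
Proof.
elim: s => [|q s IH] Hle Hpw; first by rewrite !big_nil measure0.
move: Hpw; rewrite pairwise_cons => /andP[Hall Hpw].
have mU : measurable (\big[setU/set0]_(p <- s) [set` `]p.1, p.2]]).
  by elim: (s) => [|r s' IHs]; [rewrite big_nil | rewrite big_cons; apply: measurableU].
rewrite !big_cons measureU //; last first.
  apply/seteqP; split => // w [/= Hw /mem_bigU [p ps Hp]].
  move/allP : Hall => /(_ p ps); rewrite /nov => /orP[] H;
  move: Hw Hp; rewrite /= !in_itv /=; lra.
rewrite EFinD; congr (_ + _); last first.
  apply: IH => // p ps; apply: Hle; by rewrite in_cons ps orbT.
rewrite [LHS](lebesgue_measure_itv `]q.1, q.2]) /=.
rewrite lte_fin -EFinD.
have := Hle q (mem_head _ _); rewrite le_eqVlt => /orP[/eqP ->|->] //.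
by rewrite ltxx subrr.
Qed.

Lemma bigU_measurable (R : realType) (s : seq (R*R)) :
  measurable (\big[setU/set0]_(p <- s) [set` `]p.1, p.2]]).
Proof.
by elim: s => [|r s' IHs]; [rewrite big_nil | rewrite big_cons; apply: measurableU].
Qed.
Lemma key {R : realType} (x y : R) (F P : R -> R) (Z : set R) :
  x <= y -> measurable Z -> (@lebesgue_measure R) Z = 0%E ->
  (forall e, 0 < e -> exists2 d, 0 < d & forall s : seq (R*R),
     (forall p, p \in s -> x <= p.1 /\ p.1 <= p.2 /\ p.2 <= y) -> pairwise (@nov R) s ->
     \sum_(p <- s) (p.2 - p.1) < d -> \sum_(p <- s) `|F p.2 - F p.1| < e) ->
  (forall u v, x <= u -> u <= v -> v <= y -> P u <= P v) ->
  (forall t, x <= t -> t <= y -> ~ Z t -> forall eta, 0 < eta -> exists2 d, 0 < d &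
     forall u v, x <= u -> u <= t -> t <= v -> v <= y -> v - u < d ->
       `|F v - F u| <= P v - P u + eta * (v - u)) ->
  `|F y - F x| <= P y - P x.
Proof.
move=> xy mZ Z0 AC Pmon Hloc.
suff H : forall eta e, 0 < eta -> 0 < e ->
    `|F y - F x| <= P y - P x + eta * (y - x) + e.
  apply/ler_addgt0Pr => ep ep0.
  have h1 : 0 < y - x + 1 by lra.
  have h2 : 0 < ep / 2 / (y - x + 1) by apply: divr_gt0 => //; lra.
  have h3 : 0 < ep / 2 by lra.
  have := H _ _ h2 h3.
  have : ep / 2 / (y - x + 1) * (y - x) <= ep / 2.
    rewrite mulrAC ler_pdivrMr // ler_wpM2l //; lra.
  lra.
move=> eta e eta0 e0.
have [d d0 Hd] := AC e e0.
have Zfin : ((@lebesgue_measure R) Z < +oo)%E by rewrite Z0 ltry.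
have [U [oU ZU hUZ]] := @lebesgue_regularity_outer R Z d mZ Zfin d0.
have mU : measurable U by exact: measurable_realfun.open_measurable.
have hU : ((@lebesgue_measure R) U < d%:E)%E.
  apply: (le_lt_trans _ hUZ).
  rewrite -[X in (_ <= X)%E]adde0 -Z0.
  apply: le_trans (measureU2 _ _ _) => //.
  - apply: le_measure; rewrite ?inE //.
      by apply: measurableU => //; exact: measurableD.
    by move=> w Uw; have [Zw|nZw] := pselect (Z w); [right|left].
  - exact: measurableD.
pose Inv z := exists s : seq (R*R), [/\ (forall p, p \in s ->
    [/\ x <= p.1, p.1 <= p.2, p.2 <= z & [set w | p.1 <= w <= p.2] `<=` U]),
    pairwise (@nov R) s &
    `|F z - F x| <= P z - P x + eta * (z - x) + \sum_(p <- s) `|F p.2 - F p.1|].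
suff [s [Hs Hpw Hb]] : Inv y.
  have Hl : \sum_(p <- s) (p.2 - p.1) < d.
    rewrite -lte_fin; apply: le_lt_trans hU.
    rewrite -meas_bigU; last 2 first.
    - by move=> p /Hs [].
    - exact: Hpw.
    apply: le_measure; rewrite ?inE //; first exact: bigU_measurable.
    move=> w /mem_bigU [p /Hs [_ _ _ HU]]; rewrite /= in_itv /= => /andP[h1 h2].
    by apply: HU; rewrite /= h2 andbT ltW.
  have := Hd s _ Hpw Hl.
  have H2 : forall p, p \in s -> x <= p.1 /\ p.1 <= p.2 /\ p.2 <= y.
    by move=> p /Hs [].
  move=> /(_ H2) H3; lra.
pose S := [set z | x <= z <= y /\ Inv z].
have S0 : S x.
  split; first by rewrite lexx xy.
  exists [::]; split; [by move=> p; rewrite in_nil | by [] |].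
  by rewrite big_nil !subrr normr0 mulr0 !addr0.
have hS : has_sup S.
  by split; [exists x | exists y => z [/andP[_ ?] _]].
set t := sup S.
have xt : x <= t := sup_upper_bound hS S0.
have ty : t <= y.
  by apply: ge_sup; [exists x | move=> z [/andP[_ ?] _]].
have [dl dl0 Hdl] : exists2 dl, 0 < dl & (forall z z', x <= z -> z <= t -> t <= z' ->
    z' <= y -> z' - z < dl -> Inv z -> Inv z').
  have [Zt|nZt] := pselect (Z t).
  - move: oU; rewrite openE => /(_ t (ZU t Zt)) /nbhs_ballP [dl /= dl0 Hball].
    exists dl => // z z' xz zt tz' z'y hzz' [s [Hs Hpw Hb]].
    exists ((z, z') :: s); split.
    + move=> p; rewrite in_cons => /orP[/eqP -> | ps].
        split => /=; [exact: xz | lra | exact: lexx | ].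
        move=> w /= /andP[zw wz']; apply: Hball; rewrite /ball /= ltr_norml.
        apply/andP; split; lra.
      have [h1 h2 h3 h4] := Hs p ps; split => //; lra.
    + rewrite pairwise_cons Hpw andbT; apply/allP => q qs.
      by have [_ _ h3 _] := Hs q qs; rewrite /nov /= h3 orbT.
    + rewrite big_cons /=.
      have zz' := le_trans zt tz'.
      have hP := Pmon z z' xz zz' z'y.
      have tri : `|F z' - F x| <= `|F z' - F z| + `|F z - F x| by exact: ler_distD.
      have he : eta * (z - x) <= eta * (z' - x) by apply: ler_wpM2l; [exact: ltW | lra].
      lra.
  - have [dl dl0 Hdl] := Hloc t xt ty nZt eta eta0.
    exists dl => // z z' xz zt tz' z'y hzz' [s [Hs Hpw Hb]].
    exists s; split => //.
    + move=> p ps; have [h1 h2 h3 h4] := Hs p ps; split => //; lra.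
    + have h1 := Hdl z z' xz zt tz' z'y hzz'.
      have tri : `|F z' - F x| <= `|F z' - F z| + `|F z - F x| by exact: ler_distD.
      have he : eta * (z' - x) = eta * (z' - z) + eta * (z - x) by ring.
      lra.
have dl20 : 0 < dl / 2 by lra.
have [z [/andP[xz zy] Iz] hz] := sup_adherent dl20 hS.
have hz' : t - dl / 2 < z by exact: hz.
have zt : z <= t by apply: sup_upper_bound => //; split => //; rewrite xz.
pose z' := Num.min (t + dl / 2) y.
have tz' : t <= z' by rewrite le_min ty andbT; lra.
have z'y : z' <= y by rewrite ge_min lexx orbT.
have Iz' : Inv z'.
  apply: (Hdl z z') => //.
  have : z' <= t + dl / 2 by rewrite ge_min lexx.
  rewrite -/t; lra.
have z't : z' <= t by apply: sup_upper_bound => //; split => //; rewrite z'y andbT; lra.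
have yt : y <= t.
  move: z't; rewrite ge_min => /orP[|] //; lra.
have <- : z' = y.
  apply/le_anti; rewrite z'y /= le_min lexx andbT; lra.
exact: Iz'.
Qed.
Ltac fside := repeat (apply/andP; split); apply/negP; move/eqP; lra.
Definition pw {R : realType} (a L q t : R) := powR ((t - a) / L) q.
Definition pwn {R : realType} (c L q t : R) := powR ((c - t) / L) q.

Lemma is_derive_aff {R : realType} (a k t : R) :
  is_derive t 1 (fun u => (u - a) * k) k.
Proof.
have H := is_deriveM (@is_derive_shift R t 1 (-a)) (is_derive_cst k t 1).
apply: (is_derive_eq H).
by rewrite /= scaler0 add0r /GRing.scale /= mulr1.
Qed.

Lemma is_derive_affn {R : realType} (c k t : R) :
  is_derive t 1 (fun u => (c - u) * k) (- k).
Proof.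
have H1 := is_deriveN (@is_derive_shift R t 1 (-c)).
have H := is_deriveM H1 (is_derive_cst k t 1).
have -> : (fun u => (c - u) * k) = (- shift (- c)) * cst k.
  by apply/funext => u /=; rewrite opprD opprK addrC.
apply: (is_derive_eq H).
by rewrite /= scaler0 add0r /GRing.scale /= mulrN mulr1.
Qed.

Lemma is_derive_pw {R : realType} (a L q t : R) : 0 < L -> a < t ->
  is_derive t 1 (pw a L q) (q * powR ((t - a) / L) (q - 1) / L).
Proof.
move=> L0 at0.
have h0 : 0 < (t - a) * L^-1 by apply: divr_gt0 => //; lra.
have := @is_derive1_comp _ (fun x => powR x q) (fun u => (u - a) * L^-1) t _ _ (is_derive1_powR q h0) (is_derive_aff a L^-1 t).
by move=> H; apply: (is_derive_eq H); rewrite ?mulrN.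
Qed.

Lemma is_derive_pwn {R : realType} (c L q t : R) : 0 < L -> t < c ->
  is_derive t 1 (pwn c L q) (- (q * powR ((c - t) / L) (q - 1) / L)).
Proof.
move=> L0 at0.
have h0 : 0 < (c - t) * L^-1 by apply: divr_gt0 => //; lra.
have := @is_derive1_comp _ (fun x => powR x q) (fun u => (c - u) * L^-1) t _ _ (is_derive1_powR q h0) (is_derive_affn c L^-1 t).
by move=> H; apply: (is_derive_eq H); rewrite ?mulrN.
Qed.

Lemma powR_small (R : realType) (q e : R) : 0 < q -> 0 < e ->
  exists2 d, 0 < d & forall w, 0 <= w -> w < d -> powR w q < e.
Proof.
move=> q0 e0; exists (powR e q^-1); first exact: powR_gt0.
move=> w w0 wd.
have : w `^ q < (e `^ q^-1) `^ q.
  by apply: (gt0_ltr_powR q0) => //; rewrite nnegrE ?powR_ge0.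
by rewrite -powRrM mulVf ?gt_eqF // powRr1 // ltW.
Qed.

Lemma pw_right {R : realType} (a L q : R) : 0 < L -> 0 < q ->
  pw a L q t @[t --> a^'+] --> pw a L q a.
Proof.
move=> L0 q0; rewrite /pw subrr mul0r powR0 ?gt_eqF //.
apply/cvgrPdist_lt => e e0.
have [d d0 Hd] := @powR_small R q e q0 e0.
rewrite near_withinE; apply/nbhs_ballP; exists (d * L) => /=; first exact: mulr_gt0.
move=> t; rewrite /ball /= => Bt at0.
rewrite sub0r normrN ger0_norm ?powR_ge0 //; apply: Hd.
  by apply: divr_ge0; lra.
rewrite ltr_pdivrMr //; move: Bt; rewrite ltr_norml; lra.
Qed.

Lemma pwn_left {R : realType} (c L q : R) : 0 < L -> 0 < q ->
  pwn c L q t @[t --> c^'-] --> pwn c L q c.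
Proof.
move=> L0 q0; rewrite /pwn subrr mul0r powR0 ?gt_eqF //.
apply/cvgrPdist_lt => e e0.
have [d d0 Hd] := @powR_small R q e q0 e0.
rewrite near_withinE; apply/nbhs_ballP; exists (d * L) => /=; first exact: mulr_gt0.
move=> t; rewrite /ball /= => Bt at0.
rewrite sub0r normrN ger0_norm ?powR_ge0 //; apply: Hd.
  by apply: divr_ge0; lra.
rewrite ltr_pdivrMr //; move: Bt; rewrite ltr_norml; lra.
Qed.
Lemma derivable_cont {R : realType} (f : R -> R) t : derivable f t 1 -> f x @[x --> t] --> f t.
Proof. by move=> /derivable1_diffP /differentiable_continuous. Qed.

Definition shp {R : realType} (lo hi k1 k2 q : R) (u : R) :=
  k1 * pw lo (hi - lo) q u + k2 * pwn hi (hi - lo) q u.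

Lemma is_derive_shp {R : realType} (lo hi k1 k2 q t : R) : lo < t -> t < hi ->
  is_derive t 1 (shp lo hi k1 k2 q)
    (k1 * (q * powR ((t - lo) / (hi - lo)) (q - 1) / (hi - lo))
     - k2 * (q * powR ((hi - t) / (hi - lo)) (q - 1) / (hi - lo))).
Proof.
move=> lt th; have L0 : 0 < hi - lo by lra.
have H1 := is_deriveZ k1 (@is_derive_pw R lo (hi - lo) q t L0 lt).
have H2 := is_deriveZ k2 (@is_derive_pwn R hi (hi - lo) q t L0 th).
have H := is_deriveD H1 H2.
apply: (is_derive_eq H).
by rewrite /GRing.scale /= mulrN.
Qed.

Lemma lrc_shp {R : realType} (lo hi k1 k2 q : R) : lo < hi -> 0 < q ->
  derivable_oo_LRcontinuous (shp lo hi k1 k2 q) lo hi.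
Proof.
move=> lh q0; have L0 : 0 < hi - lo by lra.
split.
- move=> t; rewrite in_itv /= => /andP[lt th].
  by case: (@is_derive_shp R lo hi k1 k2 q t lt th).
- apply: cvgD; apply: cvgM; try exact: cvg_cst.
  + exact: pw_right.
  + apply: cvg_at_right_filter; apply: derivable_cont.
    by case: (@is_derive_pwn R hi (hi - lo) q lo L0 lh).
- apply: cvgD; apply: cvgM; try exact: cvg_cst.
  + apply: cvg_at_left_filter; apply: derivable_cont.
    by case: (@is_derive_pw R lo (hi - lo) q hi L0 lh).
  + exact: pwn_left.
Qed.
Lemma lrc_within {R : realType} (f : R -> R) a b : derivable_oo_LRcontinuous f a b -> {within `[a,b], continuous f}.
Proof. exact: derivable_oo_LRcontinuous_within. Qed.
Lemma cont_shp {R : realType} (lo hi k1 k2 q : R) : lo < hi -> 0 < q -> {within `[lo,hi], continuous (shp lo hi k1 k2 q)}.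
Proof. move=> h1 h2; apply: lrc_within; exact: lrc_shp. Qed.
Lemma pw_lo {R : realType} (lo L q : R) : 0 < q -> pw lo L q lo = 0.
Proof. by move=> q0; rewrite /pw subrr mul0r powR0 // gt_eqF. Qed.
Lemma pwn_hi {R : realType} (hi L q : R) : 0 < q -> pwn hi L q hi = 0.
Proof. by move=> q0; rewrite /pwn subrr mul0r powR0 // gt_eqF. Qed.
Lemma pw_hi {R : realType} (lo hi q : R) : lo < hi -> pw lo (hi - lo) q hi = 1.
Proof. by move=> lh; rewrite /pw divff ?powR1 // gt_eqF // subr_gt0. Qed.
Lemma pwn_lo {R : realType} (lo hi q : R) : lo < hi -> pwn hi (hi - lo) q lo = 1.
Proof. by move=> lh; rewrite /pwn divff ?powR1 // gt_eqF // subr_gt0. Qed.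

Lemma int_shp {R : realType} (lo hi Alo Ahi s : R) : lo < hi -> 0 < s ->
  \int[@lebesgue_measure R]_(t in `[lo, hi])
     shp lo hi ((hi - lo) / (s + 1) * Ahi) (- ((hi - lo) / (s + 1) * Alo)) (s + 1) t
  = (hi - lo) ^+ 2 / ((s + 1) * (s + 2)) * (Ahi - Alo).
Proof.
move=> lh s0.
have L0 : 0 < hi - lo by lra.
have q1 : 0 < s + 1 by lra.
have q2 : 0 < s + 2 by lra.
pose G := shp lo hi ((hi - lo) / (s + 1) * Ahi * ((hi - lo) / (s + 2)))
   ((hi - lo) / (s + 1) * Alo * ((hi - lo) / (s + 2))) (s + 2).
have Hc := cont_shp lo hi ((hi - lo) / (s + 1) * Ahi) (- ((hi - lo) / (s + 1) * Alo)) (s + 1) lh q1.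
have Hl : derivable_oo_LRcontinuous G lo hi by exact: lrc_shp.
have Hd : {in `]lo, hi[, G^`()%classic =1
   shp lo hi ((hi - lo) / (s + 1) * Ahi) (- ((hi - lo) / (s + 1) * Alo)) (s + 1)}.
  move=> t; rewrite in_itv /= => /andP[lt th].
  have H := is_derive_shp lo hi ((hi - lo) / (s + 1) * Ahi * ((hi - lo) / (s + 2)))
   ((hi - lo) / (s + 1) * Alo * ((hi - lo) / (s + 2))) (s + 2) t lt th.
  rewrite derive1E /G derive_val.
  have -> : s + 2 - 1 = s + 1 by ring.
  rewrite /shp /pw /pwn.
  field; fside.
rewrite /Rintegral (continuous_FTC2 lh Hc Hl Hd) /=.
rewrite /G /shp pw_hi // pwn_hi // pw_lo // pwn_lo //.
field; fside.
Qed.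
Lemma AC_seq {R : realType} (a b : R) (f : R -> R) : abs_continuous_on a b f ->
  forall x y, a <= x -> y <= b ->
  forall e, 0 < e -> exists2 d, 0 < d & forall s : seq (R*R),
     (forall p, p \in s -> x <= p.1 /\ p.1 <= p.2 /\ p.2 <= y) -> pairwise (@nov R) s ->
     \sum_(p <- s) (p.2 - p.1) < d -> \sum_(p <- s) `|f p.2 - f p.1| < e.
Proof.
move=> AC x y ax yb e e0.
have [d d0 Hd] := AC e e0.
exists d => // s Hs Hpw Hsum.
pose u (i : 'I_(size s)) := (nth (0, 0) s i).1.
pose v (i : 'I_(size s)) := (nth (0, 0) s i).2.
have E1 : \sum_(p <- s) `|f p.2 - f p.1| = \sum_(i < size s) `|f (v i) - f (u i)|.
  by rewrite (big_nth (0, 0)) big_mkord.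
have E2 : \sum_(p <- s) (p.2 - p.1) = \sum_(i < size s) (v i - u i).
  by rewrite (big_nth (0, 0)) big_mkord.
rewrite E1; apply: Hd; last by rewrite -E2.
- move=> i; have := Hs _ (mem_nth (0, 0) (ltn_ord i)).
  rewrite /u /v; move=> [h1 [h2 h3]]; split; [lra | split; lra].
- move=> i j ij.
  move/(pairwiseP (0, 0)): Hpw => Hpw.
  have [lij|lji] : (i < j)%N \/ (j < i)%N.
    by move: ij; rewrite neq_ltn => /orP[] ->; [left|right].
  + have := Hpw i j (ltn_ord i) (ltn_ord j) lij.
    by rewrite /nov /u /v => /orP[] ->; [left|right].
  + have := Hpw j i (ltn_ord j) (ltn_ord i) lji.
    by rewrite /nov /u /v => /orP[] ->; [right|left].
Qed.
Lemma shp_mono {R : realType} (lo hi k1 k2 q u v : R) : lo < hi -> 0 <= k1 -> k2 <= 0 -> 0 <= q ->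
  lo <= u -> u <= v -> v <= hi -> shp lo hi k1 k2 q u <= shp lo hi k1 k2 q v.
Proof.
move=> lh k10 k20 q0 lu uv vh; have L0 : 0 < hi - lo by lra.
have h1 : pw lo (hi - lo) q u <= pw lo (hi - lo) q v.
  apply: (ge0_ler_powR q0); rewrite ?nnegrE; try (apply: divr_ge0; lra).
  by rewrite ler_pM2r ?invr_gt0 //; lra.
have h2 : pwn hi (hi - lo) q v <= pwn hi (hi - lo) q u.
  apply: (ge0_ler_powR q0); rewrite ?nnegrE; try (apply: divr_ge0; lra).
  by rewrite ler_pM2r ?invr_gt0 //; lra.
rewrite /shp; nra.
Qed.

Lemma side_bound {R : realType} (s a b lo hi : R) (f df : R -> R) (Z0 : set R) :
  0 < s -> a <= lo -> lo < hi -> hi <= b ->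
  abs_continuous_on a b f ->
  measurable Z0 -> (@lebesgue_measure R) Z0 = 0%E ->
  (forall t, ~ Z0 t -> a <= t -> t <= b -> is_derive t 1 f (df t)) ->
  s_convex_on s `[a, b] (fun t => `|df t|) ->
  forall x y, lo <= x -> x <= y -> y <= hi ->
  `|f y - f x| <= shp lo hi ((hi - lo) / (s + 1) * `|df hi|) (- ((hi - lo) / (s + 1) * `|df lo|)) (s + 1) y
                - shp lo hi ((hi - lo) / (s + 1) * `|df hi|) (- ((hi - lo) / (s + 1) * `|df lo|)) (s + 1) x.
Proof.
move=> s0 alo lh hb AC mZ0 Z00 Hder Hcv x y lx xy yh.
have L0 : 0 < hi - lo by lra.
set k1 := (hi - lo) / (s + 1) * `|df hi|.
set k2 := - ((hi - lo) / (s + 1) * `|df lo|).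
have k10 : 0 <= k1 by rewrite /k1; apply: mulr_ge0 => //; apply: divr_ge0; lra.
have k20 : k2 <= 0.
  rewrite /k2 oppr_le0; apply: mulr_ge0 => //; apply: divr_ge0; lra.
pose Z := Z0 `|` [set lo] `|` [set hi].
have mZ : measurable Z by apply: measurableU; [apply: measurableU|].
have Z0' : (@lebesgue_measure R) Z = 0%E.
  apply/le_anti; rewrite measure_ge0 andbT.
  apply: le_trans (measureU2 _ _ _) _ => //; first exact: measurableU.
  rewrite [X in (_ + X <= _)%E](_ : _ = 0%E); last exact: lebesgue_measure_set1.
  rewrite adde0; apply: le_trans (measureU2 _ _ _) _ => //.
  rewrite [X in (_ + X <= _)%E](_ : _ = 0%E); last exact: lebesgue_measure_set1.
  by rewrite adde0 [X in (X <= _)%E](_ : _ = 0%E).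
apply: (@key R x y f (shp lo hi k1 k2 (s + 1)) Z xy mZ Z0').
- have [ax yb] : a <= x /\ y <= b by split; lra.
  exact: AC_seq AC x y ax yb.
- move=> u v xu uv vy; apply: shp_mono => //; lra.
- move=> t xt ty nZt eta eta0.
  have tlo : lo < t.
    rewrite lt_neqAle; apply/andP; split; last lra.
    by apply/negP => /eqP E; apply: nZt; left; right; rewrite /= E.
  have thi : t < hi.
    rewrite lt_neqAle; apply/andP; split; last lra.
    by apply/negP => /eqP E; apply: nZt; right; rewrite /= E.
  have Hf : is_derive t 1 f (df t).
    by apply: Hder; [move=> Zt; apply: nZt; left; left | lra | lra].
  pose ph := `|df hi| * pw lo (hi - lo) s t + `|df lo| * pwn hi (hi - lo) s t.
  have HP : is_derive t 1 (shp lo hi k1 k2 (s + 1)) ph.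
    apply: (is_derive_eq (is_derive_shp lo hi k1 k2 (s + 1) t tlo thi)).
    have -> : s + 1 - 1 = s by ring.
    rewrite /ph /k1 /k2 /pw /pwn; field; fside.
  have Hdt : `|df t| <= ph.
    have := Hcv hi lo ((t - lo) / (hi - lo)) ((hi - t) / (hi - lo)).
    have -> : (t - lo) / (hi - lo) * hi + (hi - t) / (hi - lo) * lo = t.
      field; fside.
    rewrite /ph /pw /pwn => H; rewrite (mulrC `|df hi|) (mulrC `|df lo|); apply: H.
    + by rewrite /= in_itv /=; apply/andP; split; lra.
    + by rewrite /= in_itv /=; apply/andP; split; lra.
    + by apply: divr_ge0; lra.
    + by apply: divr_ge0; lra.
    + field; fside.
  have eta2 : 0 < eta / 2 by lra.
  have [d1 d10 H1] := @straddle R f t (df t) Hf (eta / 2) eta2.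
  have [d2 d20 H2] := @straddle R _ t ph HP (eta / 2) eta2.
  exists (Num.min d1 d2); first by rewrite lt_min d10 d20.
  move=> u v xu ut tv vy hd.
  have hd1 : v - u < d1 by move: hd; rewrite lt_min => /andP[].
  have hd2 : v - u < d2 by move: hd; rewrite lt_min => /andP[].
  have := H1 u v ut tv hd1.
  have := H2 u v ut tv hd2.
  have uv0 : 0 <= v - u by lra.
  have hm : `|df t| * (v - u) <= ph * (v - u) by apply: ler_wpM2r.
  have hn : `|df t * (v - u)| = `|df t| * (v - u) by rewrite normrM (ger0_norm uv0).
  have tri : `|f v - f u| <= `|f v - f u - df t * (v - u)| + `|df t * (v - u)|.
    by have := ler_normD (f v - f u - df t * (v - u)) (df t * (v - u)); rewrite subrK.
  move=> /ler_normlP [h2a h2b] h1.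
  lra.
Qed.
Lemma int_cst {R : realType} (p q k : R) :
  (@lebesgue_measure R).-integrable `[p, q] (EFin \o (fun=> k)).
Proof.
apply: continuous_compact_integrable; first exact: segment_compact.
by apply: continuous_subspaceT => x; exact: cst_continuous.
Qed.

Lemma int_sub {R : realType} (a b p q : R) (F : R -> \bar R) : a <= p -> q <= b ->
  (@lebesgue_measure R).-integrable `[a, b] F -> (@lebesgue_measure R).-integrable `[p, q] F.
Proof.
move=> ap qb; apply: integrableS => //.
by move=> t; rewrite /= !in_itv /= => /andP[h1 h2]; apply/andP; split; lra.
Qed.

Lemma int_Ml {R : realType} (p q : R) (F h : R -> R) :
  (@lebesgue_measure R).-integrable `[p, q] (EFin \o F) ->
  (@lebesgue_measure R).-integrable `[p, q] (EFin \o h) ->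
  (forall t, p <= t <= q -> `|h t| <= 1) ->
  (@lebesgue_measure R).-integrable `[p, q] (EFin \o (fun t => F t * h t)).
Proof.
move=> iF ih hb.
have mh := measurable_int _ ih.
move/measurable_realfun.measurable_EFinP : mh => mh.
have bh : [bounded h x | x in `[p, q]%classic].
  exists 1; split => // M M1 t Dt; apply: le_trans (hb t _) _; last exact: ltW.
  by move: Dt; rewrite /= in_itv.
have := integrableMl _ iF mh bh.
move=> /(_ (measurable_itv _)) H.
by apply: eq_integrable H => // t Dt /=.
Qed.

Lemma Rint_cst {R : realType} (p q k : R) : p <= q ->
  \int[@lebesgue_measure R]_(t in `[p, q]) k = k * (q - p).
Proof.
move=> pq; rewrite Rintegral_cst //; congr (_ * _).
rewrite [X in fine X](lebesgue_measure_itv `[p, q]) /= lte_fin.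
move: pq; rewrite le_eqVlt => /orP[/eqP ->|-> //]; by rewrite ltxx subrr.
Qed.

Lemma int_split {R : realType} (a c b : R) (F : R -> R) : a <= c -> c <= b ->
  (@lebesgue_measure R).-integrable `[a, b] (EFin \o F) ->
  \int[@lebesgue_measure R]_(t in `[a, b]) F t =
  \int[@lebesgue_measure R]_(t in `[a, c]) F t + \int[@lebesgue_measure R]_(t in `[c, b]) F t.
Proof.
move=> ac cb iF.
have H := @Rintegral_itvB R F (BLeft a) (BRight b) c iF.
have iF2 : (@lebesgue_measure R).-integrable [set` Interval (BRight c) (BRight b)] (EFin \o F).
  apply: integrableS iF => //.
  by move=> t; rewrite /= !in_itv /= => /andP[h1 h2]; apply/andP; split; lra.
have H2 := @Rintegral_itv_obnd_cbnd R c (BRight b) F iF2.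
rewrite -H2 -H ?bnd_simp //; ring.
Qed.
Lemma leq_eq_ {R : realType} (x y : R) : x = y -> x <= y.
Proof. by move->. Qed.

Lemma mitv {R : realType} (p q : R) : measurable (`[p, q]%classic : set (measurableTypeR R)).
Proof. exact: measurable_itv. Qed.

Lemma int_shp_i {R : realType} (lo hi k1 k2 q : R) : lo < hi -> 0 < q ->
  (@lebesgue_measure R).-integrable `[lo, hi] (EFin \o shp lo hi k1 k2 q).
Proof.
move=> lh q0; apply: continuous_compact_integrable; first exact: segment_compact.
exact: cont_shp.
Qed.

Lemma side_int {R : realType} (s a b lo hi : R) (f df h : R -> R) (Z0 : set R) :
  0 < s -> a <= lo -> lo <= hi -> hi <= b ->
  abs_continuous_on a b f ->
  measurable Z0 -> (@lebesgue_measure R) Z0 = 0%E ->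
  (forall t, ~ Z0 t -> a <= t -> t <= b -> is_derive t 1 f (df t)) ->
  s_convex_on s `[a, b] (fun t => `|df t|) ->
  (@lebesgue_measure R).-integrable `[a, b] (EFin \o f) ->
  (@lebesgue_measure R).-integrable `[a, b] (EFin \o h) ->
  (forall t, a <= t <= b -> `|h t| <= 1) ->
  `|\int[@lebesgue_measure R]_(t in `[lo, hi]) ((f t - f hi) * h t)|
     <= (hi - lo) ^+ 2 * (`|df lo| / ((s + 1) * (s + 2)) + `|df hi| / (s + 2))
  /\
  `|\int[@lebesgue_measure R]_(t in `[lo, hi]) ((f t - f lo) * h t)|
     <= (hi - lo) ^+ 2 * (`|df hi| / ((s + 1) * (s + 2)) + `|df lo| / (s + 2)).
Proof.
move=> s0 alo lh hb AC mZ0 Z00 Hder Hcv iF iH hb1.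
have s1 : 0 < s + 1 by lra.
have s2 : 0 < s + 2 by lra.
have rge0 : forall u v : R, 0 <= (hi - lo) ^+ 2 * (`|u| / ((s + 1) * (s + 2)) + `|v| / (s + 2)).
  move=> u v; apply: mulr_ge0; first exact: sqr_ge0.
  by apply: addr_ge0; apply: divr_ge0 => //; nra.
move: lh; rewrite le_eqVlt => /orP[/eqP E|lh].
  by rewrite -E set_itv1 !Rintegral_set1 normr0 subrr expr0n /= mul0r; split.
set k1 := (hi - lo) / (s + 1) * `|df hi|.
set k2 := - ((hi - lo) / (s + 1) * `|df lo|).
set P := shp lo hi k1 k2 (s + 1).
have Phi : P hi = (hi - lo) / (s + 1) * `|df hi|.
  by rewrite /P /shp pw_hi // pwn_hi // mulr0 addr0 mulr1.
have Plo : P lo = - ((hi - lo) / (s + 1) * `|df lo|).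
  by rewrite /P /shp pw_lo // pwn_lo // mulr0 add0r mulr1.
have IP : \int[@lebesgue_measure R]_(t in `[lo, hi]) P t
    = (hi - lo) ^+ 2 / ((s + 1) * (s + 2)) * (`|df hi| - `|df lo|).
  exact: int_shp.
have iP := @int_shp_i R lo hi k1 k2 (s + 1) lh s1.
have iFs : (@lebesgue_measure R).-integrable `[lo, hi] (EFin \o f).
  by apply: int_sub iF; lra.
have iHs : (@lebesgue_measure R).-integrable `[lo, hi] (EFin \o h).
  by apply: int_sub iH; lra.
have hbs : forall t, lo <= t <= hi -> `|h t| <= 1.
  by move=> t /andP[h1 h2]; apply: hb1; apply/andP; split; lra.
have iFc : forall c, (@lebesgue_measure R).-integrable `[lo, hi] (EFin \o (fun t => f t - f c)).
  by move=> c; have := integrableB (mitv lo hi) iFs (int_cst lo hi (f c)).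
have iprod : forall c, (@lebesgue_measure R).-integrable `[lo, hi]
    (EFin \o (fun t => (f t - f c) * h t)).
  by move=> c; apply: int_Ml.
have bnd := @side_bound R s a b lo hi f df Z0 s0 alo lh hb AC mZ0 Z00 Hder Hcv.
have key1 : forall c g1, (forall t, lo <= t <= hi -> `|f t - f c| <= g1 t) ->
    (@lebesgue_measure R).-integrable `[lo, hi] (EFin \o g1) ->
    `|\int[@lebesgue_measure R]_(t in `[lo, hi]) ((f t - f c) * h t)|
       <= \int[@lebesgue_measure R]_(t in `[lo, hi]) g1 t.
  move=> c g1 Hg ig.
  apply: le_trans (le_normr_Rintegral _ (iprod c)) _ => //.
  apply: le_Rintegral => //; first exact: integrable_norm.
  move=> t; rewrite /= in_itv /= => Ht.
  rewrite normrM; apply: le_trans (Hg t Ht).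
  by rewrite -[X in _ <= X]mulr1; apply: ler_wpM2l => //; apply: hbs.
split.
- have := key1 hi (fun t => P hi - P t).
  have iG : (@lebesgue_measure R).-integrable `[lo, hi] (EFin \o (fun t => P hi - P t)).
    by have := integrableB (mitv lo hi) (int_cst lo hi (P hi)) iP.
  move=> /(_ _ iG) H; apply: le_trans (H _) _.
    move=> t /andP[h1 h2]; rewrite distrC; apply: bnd => //.
  rewrite RintegralB //; last exact: int_cst.
  rewrite Rint_cst; last lra.
  rewrite IP Phi; apply: leq_eq_; field; fside.
- have := key1 lo (fun t => P t - P lo).
  have iG : (@lebesgue_measure R).-integrable `[lo, hi] (EFin \o (fun t => P t - P lo)).
    by have := integrableB (mitv lo hi) iP (int_cst lo hi (P lo)).
  move=> /(_ _ iG) H; apply: le_trans (H _) _.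
    move=> t /andP[h1 h2]; apply: bnd => //.
  rewrite RintegralB //; last exact: int_cst.
  rewrite Rint_cst; last lra.
  rewrite IP Plo; apply: leq_eq_; field; fside.
Qed.
Lemma iB {R : realType} (p q : R) (F1 F2 : R -> R) :
  (@lebesgue_measure R).-integrable `[p, q] (EFin \o F1) ->
  (@lebesgue_measure R).-integrable `[p, q] (EFin \o F2) ->
  (@lebesgue_measure R).-integrable `[p, q] (EFin \o (fun t => F1 t - F2 t)).
Proof. by move=> i1 i2; have := integrableB (mitv p q) i1 i2. Qed.

Lemma iZ {R : realType} (p q k : R) (F : R -> R) :
  (@lebesgue_measure R).-integrable `[p, q] (EFin \o F) ->
  (@lebesgue_measure R).-integrable `[p, q] (EFin \o (fun t => k * F t)).
Proof. by move=> i1; have := integrableZl (mitv p q) k i1. Qed.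

Lemma int_lin1 {R : realType} (p q k : R) (F G : R -> R) : p <= q ->
  (@lebesgue_measure R).-integrable `[p, q] (EFin \o F) ->
  (@lebesgue_measure R).-integrable `[p, q] (EFin \o G) ->
  (@lebesgue_measure R).-integrable `[p, q] (EFin \o (fun t => F t * G t)) ->
  \int[@lebesgue_measure R]_(t in `[p, q]) ((F t - k) * G t) =
  \int[@lebesgue_measure R]_(t in `[p, q]) (F t * G t) - k * \int[@lebesgue_measure R]_(t in `[p, q]) G t.
Proof.
move=> pq iF iG iFG.
under eq_Rintegral => t _ do rewrite mulrBl.
rewrite RintegralB //; last exact: iZ.
by rewrite RintegralZl.
Qed.

Lemma int_lin2 {R : realType} (p q k : R) (F G : R -> R) : p <= q ->
  (@lebesgue_measure R).-integrable `[p, q] (EFin \o F) ->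
  (@lebesgue_measure R).-integrable `[p, q] (EFin \o G) ->
  (@lebesgue_measure R).-integrable `[p, q] (EFin \o (fun t => F t * G t)) ->
  \int[@lebesgue_measure R]_(t in `[p, q]) ((F t - k) * (1 - G t)) =
  \int[@lebesgue_measure R]_(t in `[p, q]) F t
  - \int[@lebesgue_measure R]_(t in `[p, q]) (F t * G t)
  - k * (q - p) + k * \int[@lebesgue_measure R]_(t in `[p, q]) G t.
Proof.
move=> pq iF iG iFG.
under eq_Rintegral => t _ do rewrite mulrBl !mulrBr !mulr1.
have ik := int_cst p q k.
rewrite RintegralB //; last 2 first.
- exact: iB.
- by apply: iB => //; exact: iZ.
rewrite RintegralB // RintegralB //; last exact: iZ.
rewrite Rint_cst // RintegralZl //; ring.
Qed.
Theorem theorem2p2 (R : realType) (s a b : R) (f g df : R -> R) :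
  0 < s -> s <= 1 ->
  0 <= a -> a < b ->
  (@lebesgue_measure R).-integrable `[a, b] (EFin \o f) ->
  (@lebesgue_measure R).-integrable `[a, b] (EFin \o g) ->
  (forall t, a <= t <= b -> 0 <= g t <= 1) ->
  abs_continuous_on a b f ->
  (* df is a derivative of f: f is differentiable with derivative df x
     at almost every x of [a,b] *)
  {ae (@lebesgue_measure R),
     forall x, a <= x <= b -> is_derive x 1 f (df x)} ->
  (@lebesgue_measure R).-integrable `[a, b]
     (EFin \o (fun t => g t * df t)) ->
  s_convex_on s `[a, b] (fun t => `|df t|) ->
  let lam := \int[@lebesgue_measure R]_(t in `[a, b]) g t in
  `| \int[@lebesgue_measure R]_(t in `[a, a + lam]) f t
     - \int[@lebesgue_measure R]_(t in `[a, b]) (f t * g t) |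
    <= ((s + 1) * (s + 2))^-1 * (lam ^+ 2 * `|df a| + (b - a - lam) ^+ 2 * `|df b|)
       + (s + 2)^-1 * (lam ^+ 2 + (b - a - lam) ^+ 2) * `|df (a + lam)|
  /\
  `| \int[@lebesgue_measure R]_(t in `[a, b]) (f t * g t)
     - \int[@lebesgue_measure R]_(t in `[b - lam, b]) f t |
    <= ((s + 1) * (s + 2))^-1 * (lam ^+ 2 * `|df b| + (b - a - lam) ^+ 2 * `|df a|)
       + (s + 2)^-1 * (lam ^+ 2 + (b - a - lam) ^+ 2) * `|df (b - lam)|.
Proof.
move=> s0 s1 a0 ab iF iG g01 AC ae iGdf Hcv lam.
move: ae => [Z0 [mZ0 Z00 HZ]].
have mZ0' : measurable (Z0 : set R) by exact: mZ0.
have Hder : forall t, ~ Z0 t -> a <= t -> t <= b -> is_derive t 1 f (df t).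
  move=> t nZ at0 tb.
  have [P|nP] := pselect (a <= t <= b -> is_derive t 1 f (df t)).
    by apply: P; rewrite at0 tb.
  by exfalso; apply: nZ; apply: HZ.
have gb : forall t, a <= t <= b -> `|g t| <= 1.
  by move=> t /g01 /andP[h1 h2]; rewrite ger0_norm.
have g1b : forall t, a <= t <= b -> `|1 - g t| <= 1.
  move=> t /g01 /andP[h1 h2]; rewrite ger0_norm; lra.
have i1g : (@lebesgue_measure R).-integrable `[a, b] (EFin \o (fun t => 1 - g t)).
  exact: iB (int_cst a b 1) iG.
have lam0 : 0 <= lam.
  by apply: Rintegral_ge0 => t; rewrite /= in_itv /= => /g01 /andP[].
have lamb : lam <= b - a.
  rewrite /lam -[X in _ <= X]mul1r -(@Rint_cst R a b 1); last lra.
  apply: le_Rintegral => //; first exact: int_cst.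
  by move=> t; rewrite /= in_itv /= => /g01 /andP[].
have iFG : forall p q, a <= p -> q <= b ->
    (@lebesgue_measure R).-integrable `[p, q] (EFin \o (fun t => f t * g t)).
  move=> p q ap qb; apply: int_sub ap qb _.
  by apply: int_Ml.
have iFs : forall p q, a <= p -> q <= b -> (@lebesgue_measure R).-integrable `[p, q] (EFin \o f).
  by move=> p q ap qb; apply: int_sub iF.
have iGs : forall p q, a <= p -> q <= b -> (@lebesgue_measure R).-integrable `[p, q] (EFin \o g).
  by move=> p q ap qb; apply: int_sub iG.
have split_lam : forall c, a <= c -> c <= b ->
    lam = \int[@lebesgue_measure R]_(t in `[a, c]) g t + \int[@lebesgue_measure R]_(t in `[c, b]) g t.
  by move=> c ac cb; rewrite /lam (int_split a c b g ac cb iG).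
have fg_split : forall c, a <= c -> c <= b ->
    \int[@lebesgue_measure R]_(t in `[a, b]) (f t * g t) =
    \int[@lebesgue_measure R]_(t in `[a, c]) (f t * g t) + \int[@lebesgue_measure R]_(t in `[c, b]) (f t * g t).
  by move=> c ac cb; rewrite (int_split a c b (fun t => f t * g t) ac cb (iFG a b (lexx a) (lexx b))).
split.
- set c := a + lam.
  have ac : a <= c by rewrite /c; lra.
  have cb : c <= b by rewrite /c; lra.
  have [T1 _] := @side_int R s a b a c f df (fun t => 1 - g t) Z0 s0 (lexx a) ac cb AC mZ0' Z00 Hder Hcv iF i1g g1b.
  have [_ T2] := @side_int R s a b c b f df g Z0 s0 ac cb (lexx b) AC mZ0' Z00 Hder Hcv iF iG gb.
  have E : \int[@lebesgue_measure R]_(t in `[a, c]) f t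
      - \int[@lebesgue_measure R]_(t in `[a, b]) (f t * g t)
    = \int[@lebesgue_measure R]_(t in `[a, c]) ((f t - f c) * (1 - g t))
      - \int[@lebesgue_measure R]_(t in `[c, b]) ((f t - f c) * g t).
    rewrite int_lin2 //; [|exact: iFs|exact: iGs|exact: iFG].
    rewrite int_lin1 //; [|exact: iFs|exact: iGs|exact: iFG].
    rewrite (fg_split c ac cb).
    have -> : c - a = lam by rewrite /c; ring.
    rewrite (split_lam c ac cb); ring.
  rewrite E; apply: le_trans (ler_normB _ _) _.
  have -> : b - a - lam = b - c by rewrite /c; ring.
  have -> : lam = c - a by rewrite /c; ring.
  apply: le_trans (lerD T1 T2) _; apply: leq_eq_.
  field; fside.
- set c := b - lam.
  have ac : a <= c by rewrite /c; lra.
  have cb : c <= b by rewrite /c; lra.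
  have [U1 _] := @side_int R s a b a c f df g Z0 s0 (lexx a) ac cb AC mZ0' Z00 Hder Hcv iF iG gb.
  have [_ U2] := @side_int R s a b c b f df (fun t => 1 - g t) Z0 s0 ac cb (lexx b) AC mZ0' Z00 Hder Hcv iF i1g g1b.
  have E : \int[@lebesgue_measure R]_(t in `[a, b]) (f t * g t)
      - \int[@lebesgue_measure R]_(t in `[c, b]) f t
    = \int[@lebesgue_measure R]_(t in `[a, c]) ((f t - f c) * g t)
      - \int[@lebesgue_measure R]_(t in `[c, b]) ((f t - f c) * (1 - g t)).
    rewrite int_lin2 //; [|exact: iFs|exact: iGs|exact: iFG].
    rewrite int_lin1 //; [|exact: iFs|exact: iGs|exact: iFG].
    rewrite (fg_split c ac cb).
    have -> : b - c = lam by rewrite /c; ring.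
    rewrite (split_lam c ac cb); ring.
  rewrite E; apply: le_trans (ler_normB _ _) _.
  have -> : b - a - lam = c - a by rewrite /c; ring.
  have -> : lam = b - c by rewrite /c; ring.
  apply: le_trans (lerD U1 U2) _; apply: leq_eq_.
  field; fside.
Qed.
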